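(* Let $\Delta,\Sigma$ be alphabets, $\varphi:\Delta\to2^{\Sigma^*}$ a regular language substitution, and $K_1,K_2\subseteq\Delta^+$ regular languages such that $\mathcal{R}_1=(K_1,\varphi)$ and $\mathcal{R}_2=(K_2,\varphi)$ are finite. Then $\mathcal{R}_1\cap\mathcal{R}_2$ is a finite rational set of regular languages that can be expressed with the language substitution $\varphi$, i.e. $\mathcal{R}_1\cap\mathcal{R}_2=(K_3,\varphi)$ for some regular $K_3\subseteq\Delta^+$.
   Context: A regular language substitution $\varphi:\Delta\to2^{\Sigma^*}$ maps each symbol to a regular language over $\Sigma$, extended by $\varphi(\delta w)=\varphi(\delta)\varphi(w)$. For $K\subseteq\Delta^+$, $(K,\varphi)=\{\varphi(w)\mid w\in K\}$; when $K$ is regular this set is a rational set of regular languages. Intersection is the ordinary set intersection of the two sets of languages. *)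

(* Defs.v *)
From Stdlib Require List.
From mathcomp Require Import all_boot.
Set Implicit Arguments. Unset Strict Implicit. Unset Printing Implicit Defensive.

Definition lang (S : finType) := seq S -> Prop.

Record dfa (S : finType) := DFA {
  dfa_state : finType;
  dfa_start : dfa_state;
  dfa_trans : dfa_state -> S -> dfa_state;
  dfa_final : pred dfa_state }.
Arguments dfa_state {S}.
Arguments dfa_start {S}.
Arguments dfa_trans {S}.
Arguments dfa_final {S}.

Definition dfa_accept (S : finType) (A : dfa S) (w : seq S) : bool :=
  dfa_final A (foldl (dfa_trans A) (dfa_start A) w).

Definition regular (S : finType) (L : lang S) : Prop :=
  exists A : dfa S, forall w, L w <-> dfa_accept A w.

Definition plus_lang (S : finType) (L : lang S) : Prop := ~ L [::].

Definition conc (S : finType) (L1 L2 : lang S) : lang S :=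
  fun w => exists u v, w = u ++ v /\ L1 u /\ L2 v.

Definition eps_lang (S : finType) : lang S := fun w => w = [::].

Fixpoint subst_word (D S : finType) (phi : D -> lang S) (w : seq D) : lang S :=
  match w with
  | [::] => @eps_lang S
  | d :: w' => conc (phi d) (subst_word phi w')
  end.

Definition regular_subst (D S : finType) (phi : D -> lang S) : Prop :=
  forall d, regular (phi d).

(* The set of languages (K, phi) = { phi(w) | w in K }. *)
Definition subst_image (D S : finType) (K : lang D) (phi : D -> lang S)
  : lang S -> Prop :=
  fun L => exists w, K w /\ L = subst_word phi w.

Definition finite_langset (S : finType) (R : lang S -> Prop) : Prop :=
  exists s : list (lang S), forall L, R L <-> List.In L s.

(* Main.v *)
From Stdlib Require Import Classical.
From Stdlib Require List.
Require Import Defs.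
From mathcomp Require Import all_boot.

Set Implicit Arguments. Unset Strict Implicit. Unset Printing Implicit Defensive.

Section Reg.
Variable S : finType.

Lemma regular_ext (L1 L2 : lang S) : (forall w, L1 w <-> L2 w) -> regular L1 -> regular L2.
Proof. move=> H [A HA]; exists A => w; rewrite -HA; by symmetry. Qed.

Lemma regular_empty : regular (fun _ : seq S => False).
Proof.
exists (@DFA S unit tt (fun _ _ => tt) pred0) => w; split => //.
Qed.

Definition pdfa (A B : dfa S) : dfa S :=
  @DFA S (dfa_state A * dfa_state B)%type (dfa_start A, dfa_start B)
    (fun p a => (dfa_trans A p.1 a, dfa_trans B p.2 a))
    (fun p => dfa_final A p.1 || dfa_final B p.2).

Lemma foldl_pair (A B : dfa S) (w : seq S) x y :
  foldl (dfa_trans (pdfa A B)) (x, y) w =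
  (foldl (dfa_trans A) x w, foldl (dfa_trans B) y w).
Proof. elim: w x y => //= a w IH x y; exact: IH. Qed.

Lemma regular_union (L1 L2 : lang S) : regular L1 -> regular L2 ->
  regular (fun w => L1 w \/ L2 w).
Proof.
move=> [A HA] [B HB]; exists (pdfa A B) => w.
rewrite /dfa_accept /= foldl_pair /= HA HB /dfa_accept.
split; [by case=> ->; rewrite ?orbT | by case/orP; auto].
Qed.

Section Single.
Variable w : seq S.
Definition sst := 'I_(size w).+2.
Definition sdead : sst := ord_max.
Definition strans (i : sst) (a : S) : sst :=
  if (i < size w) && (nth a w i == a) then inord i.+1 else sdead.
Definition sdfa : dfa S :=
  @DFA S sst (inord 0) strans (fun i => nat_of_ord i == size w).

Lemma sdead_stay v : foldl strans sdead v = sdead.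
Proof.
elim: v => //= a v IH; rewrite /strans /= ltnNge leqnSn /=; exact: IH.
Qed.

Lemma sfold v (i : nat) : i <= size w ->
  (nat_of_ord (foldl strans (inord i) v) == size w) = (v == drop i w).
Proof.
elim: v i => [|a v IH] i Hi /=.
  rewrite inordK; last by rewrite ltnS ltnW.
  rewrite [RHS]eq_sym -size_eq0 size_drop subn_eq0; by rewrite eqn_leq Hi.
have Hio : i < (size w).+2 by rewrite ltnS ltnW.
rewrite /strans inordK //.
case: ltnP => Hlt /=.
  rewrite (drop_nth a Hlt) eqseq_cons.
  case: (nth a w i =P a) => [E|Hne] /=; first by rewrite E eqxx /=; apply: IH.
  idtac.
  rewrite sdead_stay /= (gtn_eqF (ltnSn _)).
  by case: (a =P nth a w i) => // E; exfalso; exact: Hne (esym E).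
rewrite sdead_stay /= (gtn_eqF (ltnSn _)) drop_oversize //.
Qed.

Lemma regular_single : regular (fun v => v = w).
Proof.
exists sdfa => v; rewrite /dfa_accept /= sfold // drop0; split => [->|/eqP //].
by rewrite eqxx.
Qed.
End Single.

Lemma regular_finite (ws : seq (seq S)) : regular (fun v => v \in ws).
Proof.
elim: ws => [|w ws IH].
  by apply: regular_ext regular_empty => v; rewrite in_nil.
apply: regular_ext (regular_union (regular_single w) IH) => v.
by rewrite in_cons; split => [[->|->]|/orP[/eqP|]]; rewrite ?eqxx ?orbT; auto.
Qed.
End Reg.

Lemma list_filterP (A : Type) (P : A -> Prop) (s : list A) :
  exists s', forall x, List.In x s' <-> List.In x s /\ P x.
Proof.
elim: s => [|a s [s' IH]].
  by exists nil => x; split => //= [[]].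
case: (classic (P a)) => Pa.
  exists (a :: s')%list => x /=; rewrite IH; split.
    by case=> [<-|[]]; auto.
  by case=> [[<-|H] Px]; auto.
exists s' => x /=; rewrite IH; split; first by case; auto.
by case=> [[<-|H] Px] //; auto.
Qed.

Theorem proposition7 (D S : finType) (phi : D -> lang S) (K1 K2 : lang D) :
  regular_subst phi ->
  regular K1 -> plus_lang K1 ->
  regular K2 -> plus_lang K2 ->
  finite_langset (subst_image K1 phi) ->
  finite_langset (subst_image K2 phi) ->
  finite_langset (fun L => subst_image K1 phi L /\ subst_image K2 phi L) /\
  exists K3 : lang D,
    regular K3 /\ plus_lang K3 /\
    (forall L, subst_image K3 phi L <->
               (subst_image K1 phi L /\ subst_image K2 phi L)).
Proof.
move=> _ _ P1 _ _ [s1 H1] _.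
set inter := fun L => subst_image K1 phi L /\ subst_image K2 phi L.
have [s Hs] := list_filterP (subst_image K2 phi) s1.
have Hfin : forall L, inter L <-> List.In L s.
  by move=> L; rewrite Hs -H1.
split; first by exists s.
have : forall L, List.In L s -> inter L by move=> L /Hfin.
have : forall L, inter L -> List.In L s by move=> L /Hfin.
move: {Hs Hfin} s => s.
have key : forall t : list (lang S), (forall L, List.In L t -> inter L) ->
  exists ws : seq (seq D), (forall w, w \in ws -> K1 w /\ inter (subst_word phi w)) /\
    forall L, List.In L t -> exists w, w \in ws /\ L = subst_word phi w.
  elim=> [|L t IH] Ht.
    by exists [::]; split => // w; rewrite in_nil.
  have [ws [Hw1 Hw2]] : exists ws : seq (seq D), (forall w, w \in ws -> K1 w /\ inter (subst_word phi w)) /\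
    forall L, List.In L t -> exists w, w \in ws /\ L = subst_word phi w.
    by apply: IH => L' HL'; apply: Ht; right.
  have HL : inter L by apply: Ht; left.
  have [[w [Kw EL]] _] := HL.
  exists (w :: ws); split.
    move=> v; rewrite in_cons => /orP[/eqP ->|]; first by split; rewrite // -EL.
    exact: Hw1.
  move=> L' [<-|HL']; first by exists w; rewrite in_cons eqxx.
  have [v [Hv ->]] := Hw2 _ HL'; exists v; by rewrite in_cons Hv orbT.
move=> Hin Hout; have [ws [Hw1 Hw2]] := key s Hout.
exists (fun v => v \in ws); split; first exact: regular_finite.
split.
  by move=> /Hw1 [] /P1.
move=> L; split.
  by move=> [w [/Hw1 [_ H] ->]].
move=> HL; have [w [Hw ->]] := Hw2 _ (Hin _ HL); by exists w.
Qed.
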